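(* Let $\Gamma$ and the data $s_0,\eta_0,\Xi$ be as in the context and let $B\subset\mathbb R^{n-1}$ be a fixed closed ball. There exist constants $0<c\le C$ (depending on $\Gamma$, the data and $B$) such that for every cusp point $\gamma\xi\infty\in B$ ($\gamma\in\Gamma$, $\xi\in\Xi$, $\gamma\xi\notin P$), $c\,h(\gamma\xi\infty)\le\tilde h(\gamma\xi\infty)\le C\,h(\gamma\xi\infty)$.
   Context: $n\ge2$, $G=\mathrm{SO}(n,1)$, $K\cong\mathrm{SO}(n)$ maximal compact, $\mathbb H^n=G/K$ with hyperbolic distance $d$, $o=K\in G/K$. $A=\{a(t)\}$ a one-parameter $\mathbb R$-split torus with $\mathfrak g=\mathfrak g_{-1}\oplus\mathfrak z(A)\oplus\mathfrak g_{+1}$, $\mathrm{Ad}(a(t))=e^{\pm t}$ on $\mathfrak g_{\pm1}$; $M=Z_G(A)\cap K$, $N=\exp\mathfrak g_{+1}$, $\mathfrak g_{+1}\cong\mathbb R^{n-1}$ with $\mathrm{Ad}(M)$-invariant Euclidean norm, $u(\mathbf x)=\exp\mathbf x$; $\sigma\in K$ with $\sigma^2=e$, $\sigma a(t)\sigma^{-1}=a(-t)$; $P=MAN$. Each $g\in G\setminus P$ is $g=u(\mathbf x)\sigma ma(r)u(\mathbf y)$ with $\mathbf x,r$ unique; $\partial\mathbb H^n=G/P\cong\mathbb R^{n-1}\cup\{\infty\}$ via $u(\mathbf x)\sigma P\mapsto\mathbf x$, $P\mapsto\infty$. $\Omega(\eta,s)=\eta\{a(t):t\ge s\}K$. $\Gamma$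 discrete, finite covolume, $\Gamma\backslash\mathbb H^n$ non-compact, with fixed $s_0>0$, compact $\eta_0\subset N$, finite $\Xi\ni e$ satisfying: (i) $G=\Gamma\Xi\Omega(\eta_0,s_0)$; (ii) $\Gamma\cap\xi N\xi^{-1}$ cocompact in $\xi N\xi^{-1}$; (iii) for compact $\eta$, $\{\gamma:\gamma\Xi\Omega(\eta,s_0)\cap\Omega(\eta,s_0)\ne\emptyset\}$ finite; (iv) for compact $\eta\supseteq\eta_0$ some $s_1>s_0$ with $\gamma\xi_1\Omega(\eta,s_0)\cap\xi_2\Omega(\eta,s_1)\ne\emptyset\Rightarrow\xi_1=\xi_2,\gamma\in\xi_1NM\xi_1^{-1}$. Height: for $\gamma\xi=u(\mathbf x_1)\sigma ma(r)u(\mathbf y)$, $\gamma\xi\infty=\mathbf x_1$, $h(\gamma\xi\infty)=e^r$. Busemann function: for $\zeta\in\partial\mathbb H^n$, $x,y\in\mathbb H^n$, $B_\zeta(x,y)=\lim_{t\to\infty}\big(d(x,\zeta(t))-d(y,\zeta(t))\big)$ for any geodesic ray $\zeta(t)$ converging to $\zeta$. Busemann height: $\tilde h(\gamma\xi\infty)=\exp\big(B_{\xi\infty}(\gamma^{-1}o,o)\big)$. *)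

(* Defs.v *)
From HB Require Import structures.
From mathcomp Require Import all_boot all_order all_algebra.
From mathcomp Require Import all_classical all_reals all_analysis.
Set Implicit Arguments. Unset Strict Implicit. Unset Printing Implicit Defensive.
Import Order.TTheory GRing.Theory Num.Theory.
Import numFieldNormedType.Exports.
Local Open Scope classical_set_scope.
Local Open Scope ring_scope.

(* We work in R^(k+2) with k = n-1, coordinates
   (v_0, v_1 | w) with w in R^k, and the Lorentzian form
     <v,v'> = -(v_0 v'_1 + v_1 v'_0)/2 + w.w'   (signature (n,1)).
   G = SO_0 of this form (det 1, preserving the future sheet), which is
   conjugate in GL_(n+1)(R) to SO_0(n,1) with the diagonal form.
   H^n = G.p0 (hyperboloid model), p0 = (1,1|0), o = p0, K = Stab_G(p0). *)

Section Model.
Variables (R : realType) (k : nat).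

Definition Jform : 'M[R]_(k.+2) :=
  block_mx (\matrix_(i < 2, j < 2) (if i == j then 0 else - 2^-1)) 0 0 1%:M.

Definition bil (v w : 'cV[R]_(k.+2)) : R := (v^T *m Jform *m w) 0 0.

Definition p0 : 'cV[R]_(k.+2) := col_mx (\col_(i < 2) 1) 0.

Definition inG (g : 'M[R]_(k.+2)) : Prop :=
  g^T *m Jform *m g = Jform /\ \det g = 1 /\ bil p0 (g *m p0) < 0.

Definition inK (g : 'M[R]_(k.+2)) : Prop := inG g /\ g *m p0 = p0.

Definition arccosh (z : R) : R := ln (z + Num.sqrt (z ^+ 2 - 1)).
Definition hdist (v w : 'cV[R]_(k.+2)) : R := arccosh (- bil v w).

(* split torus A = {a(t)}, Ad(a(t)) = e^t on Lie(N) *)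
Definition aa (t : R) : 'M[R]_(k.+2) :=
  block_mx (\matrix_(i < 2, j < 2)
              (if i == j then (if (i : nat) == 0%N then expR t else expR (- t)) else 0))
           0 0 1%:M.

Definition inM (m : 'M[R]_(k.+2)) : Prop :=
  inK m /\ forall t, m *m aa t = aa t *m m.

(* N = exp g_{+1}, u(x) = exp x, x in R^(n-1) = 'rV_k *)
Definition uu (x : 'rV[R]_k) : 'M[R]_(k.+2) :=
  block_mx (\matrix_(i < 2, j < 2)
              (if i == j then 1 else if (i : nat) == 0%N then (x *m x^T) 0 0 else 0))
           (col_mx (2%:R *: x) (0 : 'M[R]_(1, k))) (row_mx (0 : 'M[R]_(k, 1)) x^T) 1%:M.

Definition enorm (x : 'rV[R]_k) : R := Num.sqrt ((x *m x^T) 0 0).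

(* sigma in K, sigma^2 = 1, sigma a(t) sigma^-1 = a(-t) *)
Definition sig : 'M[R]_(k.+2) :=
  block_mx (\matrix_(i < 2, j < 2) (if i == j then 0 else 1)) 0 0
           (\matrix_(i < k, j < k) (if i == j then (if (i : nat) == 0%N then -1 else 1) else 0)).

Definition inP (g : 'M[R]_(k.+2)) : Prop :=
  exists m t x, inM m /\ g = m *m aa t *m uu x.

(* Omega(eta, s) = eta {a(t) : t >= s} K, with eta = u(E) *)
Definition Omega (E : set 'rV[R]_k) (s : R) (g : 'M[R]_(k.+2)) : Prop :=
  exists x t c, E x /\ s <= t /\ inK c /\ g = uu x *m aa t *m c.

Definition in_conjN (xi g : 'M[R]_(k.+2)) : Prop :=
  exists x, g = xi *m uu x *m invmx xi.

Definition in_conjNM (xi g : 'M[R]_(k.+2)) : Prop :=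
  exists x m, inM m /\ g = xi *m uu x *m m *m invmx xi.

(* Busemann function B_{g oo}(v,w), computed along the unit-speed geodesic
   ray t |-> g a(t) o (t -> +oo), which converges to g oo = gP. *)
Definition busemann (g : 'M[R]_(k.+2)) (v w : 'cV[R]_(k.+2)) : R :=
  lim ((hdist v (g *m aa t *m p0) - hdist w (g *m aa t *m p0)) @[t --> +oo]).

Definition bheight (gam xi : 'M[R]_(k.+2)) : R :=
  expR (busemann xi (invmx gam *m p0) p0).

Definition discrete_subgroup (Gam : 'M[R]_(k.+2) -> Prop) : Prop :=
  (forall g, Gam g -> inG g) /\ Gam 1%:M /\
  (forall g h, Gam g -> Gam h -> Gam (g *m h)) /\
  (forall g, Gam g -> Gam (invmx g)) /\
  (forall g, Gam g -> exists2 e : R, 0 < e &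
     forall h, Gam h -> (forall i j, `|h i j - g i j| < e) -> h = g).

Definition noncompact_quotient (Gam : 'M[R]_(k.+2) -> Prop) : Prop :=
  forall rho : R, exists g, inG g /\
     forall gam, Gam gam -> rho < hdist (g *m p0) (gam *m p0).

End Model.

(* Main.v *)
Require Import Defs.
From HB Require Import structures.
From mathcomp Require Import all_boot all_order all_algebra.
From mathcomp Require Import all_classical all_reals all_analysis.
From mathcomp Require Import ring lra.
Import Order.TTheory GRing.Theory Num.Theory.
Import numFieldNormedType.Exports.
Local Open Scope classical_set_scope.
Local Open Scope ring_scope.

Section A.
Variable R : realType.

Lemma Phi_cvg (a b : R) : 0 < a ->
  (fun t : R => ln ((a + b * expR (- t) ^+ 2) +
      Num.sqrt ((a + b * expR (- t) ^+ 2) ^+ 2 - expR (- t) ^+ 2)))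
  @ +oo --> ln (a + a).
Proof.
move=> a0.
have hs : (fun t : R => expR (- t)) @ +oo --> (0 : R) := @cvgr_expR R.
have hs2 : (fun t : R => expR (- t) ^+ 2) @ +oo --> (0 : R).
  have h := cvgM hs hs; rewrite mulr0 in h; exact: h.
have hA : (fun t : R => a + b * expR (- t) ^+ 2) @ +oo --> a.
  have h := cvgD (cvg_cst a) (cvgM (cvg_cst b) hs2); rewrite mulr0 addr0 in h; exact: h.
have hQ : (fun t : R => (a + b * expR (- t) ^+ 2) ^+ 2 - expR (- t) ^+ 2) @ +oo --> a ^+ 2.
  have h := cvgB (cvgM hA hA) hs2; rewrite subr0 -expr2 in h; exact: h.
have hS : (fun t : R => Num.sqrt ((a + b * expR (- t) ^+ 2) ^+ 2 - expR (- t) ^+ 2)) @ +oo --> Num.sqrt (a ^+ 2).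
  by apply: (continuous_cvg _ (@sqrt_continuous R (a ^+ 2))).
have hF : (fun t : R => (a + b * expR (- t) ^+ 2) +
      Num.sqrt ((a + b * expR (- t) ^+ 2) ^+ 2 - expR (- t) ^+ 2)) @ +oo --> a + Num.sqrt (a ^+ 2).
  exact: cvgD hA hS.
rewrite sqrtr_sqr gtr0_norm // in hF.
have lc : {for (a + a), continuous (@ln R)} by apply: continuous_ln; rewrite addr_gt0.
exact: (continuous_cvg _ lc hF).
Qed.

Lemma hA_cvg (a b : R) : (fun t : R => a + b * expR (- t) ^+ 2) @ +oo --> a.
Proof.
have hs : (fun t : R => expR (- t)) @ +oo --> (0 : R) := @cvgr_expR R.
have hs2 : (fun t : R => expR (- t) ^+ 2) @ +oo --> (0 : R).
  have h := cvgM hs hs; rewrite mulr0 in h; exact: h.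
have h := cvgD (cvg_cst a) (cvgM (cvg_cst b) hs2); rewrite mulr0 addr0 in h; exact: h.
Qed.

Lemma cvgB_oo (f g : R -> R) a b : f @ +oo --> a -> g @ +oo --> b ->
  (fun t => f t - g t) @ +oo --> a - b.
Proof. by move=> Hf Hg; apply: cvgB. Qed.

Lemma acosh_alg (a b t : R) : 0 < a + b * expR (- t) ^+ 2 ->
  ln (a + b * expR (- t) ^+ 2 + Num.sqrt ((a + b * expR (- t) ^+ 2) ^+ 2 - expR (- t) ^+ 2))
  = arccosh (a * expR t + b * expR (- t)) - t.
Proof.
move=> At.
have se : expR (- t) * expR t = 1 by rewrite -expRD addNr expR0.
have e0 : 0 < expR t := expR_gt0 t.
move: At se e0; set s := expR (- t); set e := expR t; set A := a + b * s ^+ 2 => At se e0.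
have hz : a * e + b * s = e * A.
  rewrite /A mulrDr mulrC; congr (_ + _).
  by rewrite -[LHS]mulr1 -se; ring.
have hz2 : (e * A) ^+ 2 - 1 = e ^+ 2 * (A ^+ 2 - s ^+ 2).
  by rewrite -[1 in LHS](expr1n _ 2) -se; ring.
rewrite /arccosh hz hz2 sqrtrM ?sqr_ge0 // sqrtr_sqr gtr0_norm // -mulrDr.
rewrite lnM ?expRK /= ?[t + _]addrC ?addrK //; rewrite posrE //.
by apply: (lt_le_trans At); rewrite lerDl sqrtr_ge0.
Qed.

Lemma acosh_asym (a b : R) : 0 < a ->
  (fun t : R => arccosh (a * expR t + b * expR (- t)) - t) @ +oo --> ln (a + a).
Proof.
move=> a0; have := @Phi_cvg a b a0; apply: cvg_trans; apply: near_eq_cvg.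
near=> t; apply: acosh_alg.
by near: t; exact: (cvgr_gt a (hA_cvg a b) 0 a0).
Unshelve. all: by end_near. Qed.
End A.

Lemma list_bounds (R : realFieldType) (T : eqType) (f : T -> R) (s : seq T) :
  (forall x, x \in s -> 0 < f x) ->
  exists L U, 0 < L /\ forall x, x \in s -> L <= f x /\ f x <= U.
Proof.
elim: s => [|a s IH] H.
  by exists 1, 1; split => // x; rewrite in_nil.
have [L [U [L0 HLU]]] := IH (fun x hx => H x (@mem_behead _ (a :: s) x hx)).
have fa : 0 < f a by apply: H; rewrite mem_head.
exists (Num.min L (f a)), (Num.max U (f a)); split.
  by rewrite lt_min L0 fa.
move=> x; rewrite in_cons => /orP [/eqP ->|hx].
  by rewrite ge_min le_max lexx !orbT.
have [h1 h2] := HLU x hx.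
by rewrite ge_min le_max h1 h2.
Qed.

Lemma real_key (R : realFieldType) (a b c d D : R) :
  0 <= a * b -> 0 <= c * d -> D * 2 = a * d + b * c - 1 ->
  D ^+ 2 <= (a * b) * (c * d) -> 0 < a + b + c + d -> 0 < a + b.
Proof.
move=> hab hcd hD hcs hs.
rewrite ltNge; apply/negP => hn.
have ha : a <= 0 by nra.
have hb : b <= 0 by nra.
have hc : 0 <= c by nra.
have hd : 0 <= d by nra.
have h1 : a * d <= 0 by nra.
have h2 : b * c <= 0 by nra.
have h3 : 0 <= (a * d - b * c) ^+ 2 by apply: sqr_ge0.
have h4 : (D * 2) ^+ 2 = (a * d + b * c) ^+ 2 - 2 * (a * d + b * c) + 1 by rewrite hD; ring.
have h5 : (a * d + b * c) ^+ 2 = (a * d - b * c) ^+ 2 + 4 * (a * b) * (c * d) by ring.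
have h6 : (D * 2) ^+ 2 = 4 * D ^+ 2 by ring.
nra.
Qed.

Lemma cs_sum (R : realFieldType) (k : nat) (f g : 'I_k -> R) :
  (\sum_i f i * g i) ^+ 2 <= (\sum_i f i ^+ 2) * (\sum_i g i ^+ 2).
Proof.
set A := \sum_i f i ^+ 2; set B := \sum_i g i ^+ 2; set D := \sum_i f i * g i.
have A0 : 0 <= A by apply: sumr_ge0 => i _; apply: sqr_ge0.
have B0 : 0 <= B by apply: sumr_ge0 => i _; apply: sqr_ge0.
have [Az|Ap] := eqVneq A 0.
  have fz : forall i, f i = 0.
    move=> i; apply/eqP; rewrite -sqrf_eq0; apply/eqP.
    by apply: (psumr_eq0P (fun i _ => sqr_ge0 (f i)) Az).
  have -> : D = 0 by rewrite /D big1 // => i _; rewrite fz mul0r.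
  by rewrite expr0n /= mulr_ge0.
have Apos : 0 < A by rewrite lt_def Ap A0.
have H : 0 <= \sum_i (D * f i - A * g i) ^+ 2 by apply: sumr_ge0 => i _; apply: sqr_ge0.
have E : \sum_i (D * f i - A * g i) ^+ 2 = D ^+ 2 * A - 2 * D * A * D + A ^+ 2 * B.
  transitivity (\sum_i (D ^+ 2 * f i ^+ 2 + - (2 * D * A * (f i * g i)) + A ^+ 2 * g i ^+ 2)).
    by apply: eq_bigr => i _; ring.
  by rewrite !big_split /= sumrN -!mulr_sumr.
rewrite E in H.
have : 0 <= A * (A * B - D ^+ 2) by rewrite mulrBr; nra.
by rewrite pmulr_rge0 // subr_ge0.
Qed.

Section B.
Variable R : realType.
Variable k : nat.

Definition o0 : 'I_2 := ord0.
Definition o1 : 'I_2 := ord_max.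

Definition mk2 (p q : R) : 'cV[R]_2 := \col_(i < 2) (if i == o0 then p else q).

Lemma sum2 (F : 'I_2 -> R) : \sum_(i < 2) F i = F o0 + F o1.
Proof. by rewrite !big_ord_recl big_ord0 addr0; congr (F _ + F _); apply: val_inj. Qed.

Lemma mx2_mul (f : 'I_2 -> 'I_2 -> R) p q :
  (\matrix_(i < 2, j < 2) f i j) *m mk2 p q =
  mk2 (f o0 o0 * p + f o0 o1 * q) (f o1 o0 * p + f o1 o1 * q).
Proof.
apply/matrixP => i j; rewrite !mxE sum2 !mxE /=.
by case: i => [[|[|//]] ?] /=; congr (f _ _ * _ + f _ _ * _); apply: val_inj.
Qed.

Lemma mk2_eq p q p' q' : mk2 p q = mk2 p' q' -> p = p' /\ q = q'.
Proof.
move=> /matrixP H; have := H o0 0; have := H o1 0; rewrite !mxE /=.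
by move=> -> ->.
Qed.

Lemma mk2D p q p' q' : mk2 p q + mk2 p' q' = mk2 (p + p') (q + q').
Proof. by apply/matrixP => i j; rewrite !mxE; case: ifP. Qed.

Lemma mk2Z a p q : a *: mk2 p q = mk2 (a * p) (a * q).
Proof. by apply/matrixP => i j; rewrite !mxE; case: ifP. Qed.

Lemma mk2_0 : mk2 0 0 = 0.
Proof. by apply/matrixP => i j; rewrite !mxE; case: ifP. Qed.

Lemma split_o0 : fintype.split (o0 : 'I_(1 + 1)) = inl (0 : 'I_1).
Proof.
by rewrite (_ : o0 = unsplit (inl (0 : 'I_1)) :> 'I_(1 + 1)) ?unsplitK //; apply: val_inj.
Qed.
Lemma split_o1 : fintype.split (o1 : 'I_(1 + 1)) = inr (0 : 'I_1).
Proof.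
by rewrite (_ : o1 = unsplit (inr (0 : 'I_1)) :> 'I_(1 + 1)) ?unsplitK //; apply: val_inj.
Qed.

Lemma row2_mul (A B : 'M[R]_(k, 1)) p q :
  (row_mx A B : 'M[R]_(k, 2)) *m mk2 p q = p *: A + q *: B.
Proof.
apply/matrixP => i j; rewrite !mxE sum2 !mxE !ord1 split_o0 split_o1 /=.
by rewrite mulrC [B _ _ * _]mulrC.
Qed.

Lemma tr_mk2_mul (f : 'I_2 -> 'I_2 -> R) a0 a1 b0 b1 :
  ((mk2 a0 a1)^T *m (\matrix_(i < 2, j < 2) f i j) *m mk2 b0 b1) 0 0 =
  a0 * (f o0 o0 * b0 + f o0 o1 * b1) + a1 * (f o1 o0 * b0 + f o1 o1 * b1).
Proof.
rewrite -mulmxA mx2_mul !mxE sum2 !mxE /=; congr (_ * _ + _ * _).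
Qed.

Lemma mulBCk (A : 'M[R]_2) (B : 'M[R]_(2,k)) (C : 'M[R]_(k,2)) (D : 'M[R]_k) (u : 'cV[R]_2) (v : 'cV[R]_k) :
  (block_mx A B C D : 'M[R]_(k.+2)) *m (col_mx u v : 'cV[R]_(k.+2)) =
  (col_mx (A *m u + B *m v) (C *m u + D *m v) : 'cV[R]_(k.+2)).
Proof. exact: (@mul_block_col R 2 k 2 k 1). Qed.

Lemma mulRBk (A : 'rV[R]_2) (A' : 'rV[R]_k) (B : 'M[R]_2) (B' : 'M[R]_(2,k)) (C : 'M[R]_(k,2)) (D : 'M[R]_k) :
  (row_mx A A' : 'rV[R]_(k.+2)) *m (block_mx B B' C D : 'M[R]_(k.+2)) =
  (row_mx (A *m B + A' *m C) (A *m B' + A' *m D) : 'rV[R]_(k.+2)).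
Proof. exact: (@mul_row_block R 1 2 k 2 k). Qed.

Lemma mulRCk (A : 'rV[R]_2) (A' : 'rV[R]_k) (u : 'cV[R]_2) (v : 'cV[R]_k) :
  (row_mx A A' : 'rV[R]_(k.+2)) *m (col_mx u v : 'cV[R]_(k.+2)) = A *m u + A' *m v.
Proof. exact: (@mul_row_col R 1 2 k 1). Qed.

Lemma trCk (u : 'cV[R]_2) (v : 'cV[R]_k) : (col_mx u v : 'cV[R]_(k.+2))^T = (row_mx u^T v^T : 'rV[R]_(k.+2)).
Proof. exact: (@tr_col_mx R 2 k 1). Qed.

Lemma addCk (u u' : 'cV[R]_2) (v v' : 'cV[R]_k) :
  (col_mx u v : 'cV[R]_(k.+2)) + col_mx u' v' = col_mx (u + u') (v + v').
Proof. exact: (@add_col_mx _ 2 k 1). Qed.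

Lemma scaleCk a (u : 'cV[R]_2) (v : 'cV[R]_k) :
  a *: (col_mx u v : 'cV[R]_(k.+2)) = col_mx (a *: u) (a *: v).
Proof. exact: (@scale_col_mx R 2 k 1). Qed.

Lemma bilE a0 a1 b0 b1 (c d : 'cV[R]_k) :
  bil (col_mx (mk2 a0 a1) c : 'cV[R]_(k.+2)) (col_mx (mk2 b0 b1) d) =
  - (a0 * b1 + a1 * b0) / 2 + (c^T *m d) 0 0.
Proof.
rewrite /bil /Jform trCk mulRBk ?mulmx0 addr0 add0r mulmx1 mulRCk mxE.
rewrite tr_mk2_mul /=; congr (_ + _).
rewrite /o0 /o1 /=; ring.
Qed.

Definition E0 : 'cV[R]_(k.+2) := col_mx (mk2 1 0) 0.
Definition E1 : 'cV[R]_(k.+2) := col_mx (mk2 0 1) 0.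

Lemma p0E : p0 R k = col_mx (mk2 1 1) 0.
Proof.
rewrite /p0 (_ : \col_(i < 2) 1 = mk2 1 1) //.
by apply/matrixP => i j; rewrite !mxE; case: ifP.
Qed.

Lemma p0E01 : p0 R k = E0 + E1.
Proof. by rewrite p0E /E0 /E1 addCk addr0 mk2D addr0 add0r. Qed.

Lemma aa_mul t p q (v : 'cV[R]_k) :
  aa k t *m (col_mx (mk2 p q) v : 'cV[R]_(k.+2)) = col_mx (mk2 (expR t * p) (expR (- t) * q)) v.
Proof.
rewrite /aa mulBCk mx2_mul ?mulmx0 ?mul0mx addr0 add0r mul1mx /o0 /o1 /=.
by rewrite !mul0r addr0 add0r.
Qed.

Lemma uu_mul (x : 'rV[R]_k) p q :
  uu x *m (col_mx (mk2 p q) 0 : 'cV[R]_(k.+2)) =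
  col_mx (mk2 (p + (x *m x^T) 0 0 * q) q) (q *: x^T).
Proof.
rewrite /uu mulBCk mx2_mul ?mulmx0 !addr0 row2_mul scaler0 add0r /o0 /o1 /=.
by rewrite !mul1r mul0r add0r.
Qed.

Lemma sig_mul p q :
  sig R k *m (col_mx (mk2 p q) 0 : 'cV[R]_(k.+2)) = col_mx (mk2 q p) 0.
Proof.
rewrite /sig mulBCk mx2_mul ?mulmx0 ?mul0mx !addr0 /o0 /o1 /=.
by rewrite !mul1r !mul0r addr0 add0r.
Qed.

Lemma splitv (w : 'cV[R]_(k.+2)) : exists p q (c : 'cV[R]_k), w = col_mx (mk2 p q) c.
Proof.
exists (usubmx (w : 'M[R]_(2 + k, 1)) o0 0), (usubmx (w : 'M[R]_(2 + k, 1)) o1 0),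
  (dsubmx (w : 'M[R]_(2 + k, 1))).
have hu : usubmx (w : 'M[R]_(2 + k, 1)) = mk2 (usubmx (w : 'M[R]_(2 + k, 1)) o0 0) (usubmx (w : 'M[R]_(2 + k, 1)) o1 0).
  apply/matrixP => i j; rewrite !ord1 [in RHS]mxE.
  by case: i => [[|[|//]] ?] /=; congr (usubmx _ _ _); apply: val_inj.
by rewrite -[w in LHS](@vsubmxK R 2 k 1) {1}hu.
Qed.

Lemma eR1 : expR (1 : R) != 1.
Proof. by apply/eqP => /(congr1 (@ln R)); rewrite expRK ln1 => /eqP; rewrite oner_eq0. Qed.

Lemma eRN1 : expR (-1 : R) != expR 1.
Proof.
apply/eqP => /expR_inj /eqP; rewrite -subr_eq0 -opprD.
by rewrite oppr_eq0 (_ : 1 + 1 = 2%:R) // pnatr_eq0.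
Qed.

Lemma eig0 (w : 'cV[R]_(k.+2)) : aa k 1 *m w = expR 1 *: w -> exists p, w = col_mx (mk2 p 0) 0.
Proof.
have [p [q [c ->]]] := splitv w.
rewrite aa_mul scaleCk mk2Z => /(@eq_col_mx _ 2 k 1) [/mk2_eq [_ hq] hc].
have c0 : c = 0.
  apply/eqP; move/eqP: hc; rewrite -subr_eq0 -{1}(scale1r c) -scalerBl scalemx_eq0.
  by rewrite subr_eq0 eq_sym (negbTE eR1).
have q0 : q = 0.
  apply/eqP; move/eqP: hq; rewrite -subr_eq0 -mulrBl mulf_eq0 subr_eq0.
  by rewrite (negbTE eRN1).
by exists p; rewrite c0 q0.
Qed.

Lemma eig1 (w : 'cV[R]_(k.+2)) : aa k 1 *m w = expR (-1) *: w -> exists q, w = col_mx (mk2 0 q) 0.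
Proof.
have [p [q [c ->]]] := splitv w.
rewrite aa_mul scaleCk mk2Z => /(@eq_col_mx _ 2 k 1) [/mk2_eq [hp _] hc].
have c0 : c = 0.
  apply/eqP; move/eqP: hc; rewrite -subr_eq0 -{1}(scale1r c) -scalerBl scalemx_eq0.
  rewrite subr_eq0 eq_sym; case: eqP => // /(congr1 (@ln R)); rewrite expRK ln1 => /eqP.
  by rewrite oppr_eq0 oner_eq0.
have p0' : p = 0.
  apply/eqP; move/eqP: hp; rewrite -subr_eq0 -mulrBl mulf_eq0 subr_eq0.
  by rewrite eq_sym (negbTE eRN1).
by exists q; rewrite c0 p0'.
Qed.

Lemma inM_E0 m : inM m -> m *m E0 = E0.
Proof.
move=> [[_ mp] mc].
have e0 : aa k 1 *m E0 = expR 1 *: E0.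
  by rewrite /E0 aa_mul scaleCk mk2Z scaler0 !mulr0 !mulr1.
have e1 : aa k 1 *m E1 = expR (-1) *: E1.
  by rewrite /E1 aa_mul scaleCk mk2Z scaler0 !mulr0 !mulr1.
have [p hp] : exists p, m *m E0 = col_mx (mk2 p 0) 0.
  by apply: eig0; rewrite mulmxA -mc -mulmxA e0 scalemxAr.
have [q hq] : exists q, m *m E1 = col_mx (mk2 0 q) 0.
  by apply: eig1; rewrite mulmxA -mc -mulmxA e1 scalemxAr.
move: mp; rewrite p0E01 mulmxDr hp hq -p0E01 p0E addCk mk2D addr0 add0r.
by move=> /(@eq_col_mx _ 2 k 1) [/mk2_eq [-> _] _].
Qed.

Lemma dot_sum (c d : 'cV[R]_k) : (c^T *m d) 0 0 = \sum_i c i 0 * d i 0.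
Proof. by rewrite mxE; apply: eq_bigr => i _; rewrite mxE. Qed.

Lemma dot_ge0 (c : 'cV[R]_k) : 0 <= (c^T *m c) 0 0.
Proof. by rewrite dot_sum; apply: sumr_ge0 => i _; rewrite -expr2 sqr_ge0. Qed.

Lemma cs_col (c d : 'cV[R]_k) : ((c^T *m d) 0 0) ^+ 2 <= (c^T *m c) 0 0 * (d^T *m d) 0 0.
Proof.
rewrite !dot_sum; have := @cs_sum R k (fun i => c i 0) (fun i => d i 0).
by [].
Qed.

Lemma inG_bil g (u v : 'cV[R]_(k.+2)) : inG g -> bil (g *m u) (g *m v) = bil u v.
Proof.
move=> [hg _]; rewrite /bil trmx_mul -!mulmxA (mulmxA g^T) (mulmxA (g^T *m _)) hg.
by rewrite !mulmxA.
Qed.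

Lemma inG_inv g (u : 'cV[R]_(k.+2)) : inG g -> bil (invmx g *m p0 R k) u = bil (p0 R k) (g *m u).
Proof.
move=> [hg [hd _]].
have gu : g \in unitmx by rewrite unitmxE hd unitr1.
have key : (invmx g)^T *m Jform R k = Jform R k *m g.
  by rewrite -{1}hg !mulmxA -trmx_mul mulmxV // trmx1 mul1mx.
by rewrite /bil trmx_mul -(mulmxA _ (invmx g)^T) key !mulmxA.
Qed.

Lemma z00 : (0 : 'M[R]_(1,1)) 0 0 = 0.
Proof. by rewrite mxE. Qed.

Lemma posE0 g : inG g -> 0 < - bil (p0 R k) (g *m E0).
Proof.
move=> hG.
have [a [b [c hu]]] := splitv (g *m E0).
have [c0 [d0 [d hu']]] := splitv (g *m E1).
have h1 := inG_bil g E0 E0 hG; have h2 := inG_bil g E1 E1 hG; have h3 := inG_bil g E0 E1 hG.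
have h4 := proj2 (proj2 hG).
rewrite p0E01 mulmxDr hu hu' -p0E01 p0E addCk mk2D bilE in h4.
rewrite hu hu' /E0 /E1 !bilE !trmx0 !mul0mx !z00 in h1 h2 h3.
rewrite trmx0 mul0mx z00 in h4.
rewrite hu p0E bilE trmx0 mul0mx z00.
have cs := cs_col c d.
have hc := dot_ge0 c; have hd := dot_ge0 d.
have := @real_key R a b c0 d0 ((c^T *m d) 0 0).
have e1 : (c^T *m c) 0 0 = a * b by lra.
have e2 : (d^T *m d) 0 0 = c0 * d0 by lra.
rewrite -e1 -e2; move=> /(_ hc hd) H.
have : 0 < a + b by apply: H; lra.
lra.
Qed.

Lemma bilD (v x y : 'cV[R]_(k.+2)) : bil v (x + y) = bil v x + bil v y.
Proof. by rewrite /bil mulmxDr mxE. Qed.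

Lemma bilZ (v x : 'cV[R]_(k.+2)) a : bil v (a *: x) = a * bil v x.
Proof. by rewrite /bil -scalemxAr mxE. Qed.

Lemma gaap0 (g : 'M[R]_(k.+2)) t : g *m aa k t *m p0 R k = expR t *: (g *m E0) + expR (- t) *: (g *m E1).
Proof.
rewrite -mulmxA p0E aa_mul !mulr1 !scalemxAr -mulmxDr; congr (g *m _).
by rewrite /E0 /E1 !scaleCk !mk2Z !scaler0 addCk mk2D addr0 !mulr0 !mulr1 addr0 add0r.
Qed.

Lemma busemannE (g : 'M[R]_(k.+2)) (v w : 'cV[R]_(k.+2)) : 0 < - bil v (g *m E0) -> 0 < - bil w (g *m E0) ->
  expR (busemann g v w) = (- bil v (g *m E0)) / (- bil w (g *m E0)).
Proof.
set a := - bil v (g *m E0); set a' := - bil w (g *m E0) => ha ha'.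
set b := - bil v (g *m E1); set b' := - bil w (g *m E1).
have hv : forall t, hdist v (g *m aa k t *m p0 R k) = arccosh (a * expR t + b * expR (- t)).
  by move=> t; rewrite /hdist gaap0 bilD !bilZ /a /b; congr arccosh; ring.
have hw : forall t, hdist w (g *m aa k t *m p0 R k) = arccosh (a' * expR t + b' * expR (- t)).
  by move=> t; rewrite /hdist gaap0 bilD !bilZ /a' /b'; congr arccosh; ring.
have H : (fun t => hdist v (g *m aa k t *m p0 R k) - hdist w (g *m aa k t *m p0 R k)) @ +oo
         --> ln (a + a) - ln (a' + a').
  have := @cvgB_oo R _ _ _ _ (@acosh_asym R a b ha) (@acosh_asym R a' b' ha').
  apply: cvg_trans; apply: near_eq_cvg; near=> t; rewrite /= hv hw; ring.
rewrite /busemann (cvg_lim _ H) // expRD expRN !lnK ?posrE ?addr_gt0 //.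
by field; apply/andP; split; rewrite ?lt0r_neq0 ?addr_gt0.
Unshelve. all: by end_near. Qed.

Lemma rdot_ge0 (x : 'rV[R]_k) : 0 <= (x *m x^T) 0 0.
Proof. by rewrite mxE; apply: sumr_ge0 => i _; rewrite mxE -expr2 sqr_ge0. Qed.

Lemma bheight_formula (gam xi m : 'M[R]_(k.+2)) x r y : inG gam -> inG xi -> inM m ->
  gam *m xi = uu x *m sig R k *m m *m aa k r *m uu y ->
  bheight gam xi = expR r * (1 + (x *m x^T) 0 0) / 2 / (- bil (p0 R k) (xi *m E0)).
Proof.
move=> hg hx hm hd.
have Ha : - bil (invmx gam *m p0 R k) (xi *m E0) = expR r * (1 + (x *m x^T) 0 0) / 2.
  rewrite inG_inv // mulmxA hd -!mulmxA.
  have -> : uu y *m E0 = E0 by rewrite /E0 uu_mul !mulr0 addr0 scale0r.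
  rewrite /E0 aa_mul mulr0 mulr1 (_ : col_mx (mk2 (expR r) 0) 0 = expR r *: E0); last first.
    by rewrite /E0 scaleCk mk2Z scaler0 mulr0 mulr1.
  rewrite -scalemxAr inM_E0 // /E0 scaleCk mk2Z scaler0 mulr0 mulr1 sig_mul uu_mul.
  by rewrite p0E bilE trmx0 mul0mx z00; field.
rewrite /bheight (busemannE xi (invmx gam *m p0 R k) (p0 R k)) ?Ha //; last exact: posE0.
have := rdot_ge0 x; have := expR_gt0 r => h1 h2.
by apply: divr_gt0 => //; apply: mulr_gt0 => //; lra.
Qed.

Lemma rdot_sum (x : 'rV[R]_k) : (x *m x^T) 0 0 = \sum_i x 0 i ^+ 2.
Proof. by rewrite mxE; apply: eq_bigr => i _; rewrite mxE expr2. Qed.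

Lemma xx_bound (x ctr : 'rV[R]_k) rad : enorm (x - ctr) <= rad ->
  (x *m x^T) 0 0 <= 2 * rad ^+ 2 + 2 * (ctr *m ctr^T) 0 0.
Proof.
rewrite /enorm => h.
have d0 := rdot_ge0 (x - ctr).
have hd : ((x - ctr) *m (x - ctr)^T) 0 0 <= rad ^+ 2.
  rewrite -(sqr_sqrtr d0) lerXn2r // ?nnegrE ?sqrtr_ge0 //.
  exact: le_trans (sqrtr_ge0 _) h.
apply: le_trans (_ : _ <= 2 * ((x - ctr) *m (x - ctr)^T) 0 0 + 2 * (ctr *m ctr^T) 0 0) _; last by lra.
rewrite !rdot_sum !mulr_sumr -big_split /=; apply: ler_sum => i _.
rewrite !mxE; have := sqr_ge0 (x 0 i - 2 * ctr 0 i); nra.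
Qed.

End B.
Arguments posE0 {R k}.
Arguments bheight_formula {R k}.
Arguments rdot_ge0 {R k}.
Arguments xx_bound {R k}.


Theorem proposition3p5 (R : realType) (n : nat) (Hn : (2 <= n)%N)
  (Gam : 'M[R]_(n.-1.+2) -> Prop) (Xi : seq 'M[R]_(n.-1.+2))
  (s0 : R) (eta0 : set 'rV[R]_(n.-1))
  (HGam : discrete_subgroup Gam)
  (Hnoncpt : noncompact_quotient Gam)
  (Hs0 : 0 < s0) (Heta0 : compact eta0)
  (HXiG : forall xi, xi \in Xi -> inG xi) (HXi1 : 1%:M \in Xi)
  (H_i : forall g, inG g -> exists gam xi w,
      [/\ Gam gam, xi \in Xi, Omega eta0 s0 w & g = gam *m xi *m w])
  (H_ii : forall xi, xi \in Xi -> exists2 E : set 'rV[R]_(n.-1), compact E &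
      forall x, exists gam e,
        [/\ Gam gam, in_conjN xi gam, E e &
            xi *m uu x *m invmx xi = gam *m (xi *m uu e *m invmx xi)])
  (H_iii : forall eta : set 'rV[R]_(n.-1), compact eta ->
      exists s : seq 'M[R]_(n.-1.+2), forall gam, Gam gam ->
        (exists xi w w', [/\ xi \in Xi, Omega eta s0 w, Omega eta s0 w'
                            & gam *m xi *m w = w']) ->
        gam \in s)
  (H_iv : forall eta : set 'rV[R]_(n.-1), compact eta -> eta0 `<=` eta ->
      exists2 s1, s0 < s1 &
        forall gam xi1 xi2, Gam gam -> xi1 \in Xi -> xi2 \in Xi ->
          (exists w w', [/\ Omega eta s0 w, Omega eta s1 w'
                          & gam *m xi1 *m w = xi2 *m w']) ->
          xi1 = xi2 /\ in_conjNM xi1 gam)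
  (ctr : 'rV[R]_(n.-1)) (rad : R) (Hrad : 0 < rad) :
  exists c C : R, [/\ 0 < c, c <= C &
    forall gam xi (x : 'rV[R]_(n.-1)) (m : 'M[R]_(n.-1.+2)) (r : R) (y : 'rV[R]_(n.-1)),
      Gam gam -> xi \in Xi -> ~ inP (gam *m xi) ->
      inM m -> gam *m xi = uu x *m @sig R n.-1 *m m *m aa n.-1 r *m uu y ->
      enorm (x - ctr) <= rad ->
      c * expR r <= bheight gam xi /\ bheight gam xi <= C * expR r].
Proof.
have [L [U [L0 HLU]]] := @list_bounds R _ (fun xi => - bil (p0 R n.-1) (xi *m E0 R n.-1)) Xi
  (fun xi hx => posE0 xi (HXiG xi hx)).
have [L1 U1] := HLU _ HXi1.
have U0 : 0 < U by lra.
set M := 2 * rad ^+ 2 + 2 * (ctr *m ctr^T) 0 0.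
have M0 : 0 <= M by rewrite /M; have := rdot_ge0 ctr; have := sqr_ge0 rad; lra.
exists (1 / (2 * U)), ((1 + M) / (2 * L)); split.
- by rewrite divr_gt0 // mulr_gt0.
- rewrite ler_pdivrMr ?mulr_gt0 // mulrAC ler_pdivlMr ?mulr_gt0 //; nra.
move=> gam xi x m r y Hg Hxi _ Hm Hd Hx.
have hG : inG gam := proj1 HGam gam Hg.
rewrite (bheight_formula _ _ _ _ _ _ hG (HXiG xi Hxi) Hm Hd).
have [c1 c2] := HLU xi Hxi.
set cx := - bil (p0 R n.-1) (xi *m E0 R n.-1) in c1 c2 *.
have cx0 : 0 < cx by lra.
have hxx := xx_bound _ _ _ Hx; have hx0 := rdot_ge0 x.
have er := expR_gt0 r.
set X := (x *m x^T) 0 0 in hxx hx0 *.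
split.
- have -> : 1 / (2 * U) * expR r = expR r * (1 / (2 * U)) by rewrite mulrC.
  have -> : expR r * (1 + X) / 2 / cx = expR r * ((1 + X) / (2 * cx)).
    by field; rewrite lt0r_neq0.
  rewrite ler_pM2l // ler_pdivlMr ?mulr_gt0 // mulrAC ler_pdivrMr ?mulr_gt0 //.
  nra.
- have -> : (1 + M) / (2 * L) * expR r = expR r * ((1 + M) / (2 * L)) by rewrite mulrC.
  have -> : expR r * (1 + X) / 2 / cx = expR r * ((1 + X) / (2 * cx)).
    by field; rewrite lt0r_neq0.
  rewrite ler_pM2l // ler_pdivrMr ?mulr_gt0 // mulrAC ler_pdivlMr ?mulr_gt0 //.
  have hM : X <= M by exact: hxx.
  nra.
Qed.
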